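(* Let $\mathbb B=\mathbb{F}_2^4$ and let $\circ$ be an alternative operation on $\mathbb B$. Let $g_1,g_2\in\mathrm{GL}(\mathbb B,+)$ and $f\in\mathrm{Sym}(\mathbb B)$. Then for any $g_1'\in g_1H_\circ$ and any $g_2'\in H_\circ g_2$ one has $\delta^\circ_{g_2fg_1}=\delta^\circ_{g_2'fg_1'}$.
   Context: Maps are written in postfix notation: $xf$ is the image of $x$, and $fg$ means first $f$, then $g$. An alternative operation on $\mathbb B$ is defined from an elementary abelian $2$-subgroup $T<\mathrm{AGL}(\mathbb B,+)$ acting regularly: with $\tau_a$ the unique element of $T$ with $0\tau_a=a$, $a\circ b:=a\tau_b$; $\mathrm{AGL}(\mathbb B,\circ)$ is the normaliser of $T$ in $\mathrm{Sym}(\mathbb B)$ and $\mathrm{GL}(\mathbb B,\circ)$ its stabiliser of $0$; $H_\circ:=\mathrm{GL}(\mathbb B,+)\cap\mathrm{GL}(\mathbb B,\circ)$. For $f\in\mathrm{Sym}(\mathbb B)$, $\delta^\circ_f(a,b)=\#\{x\in\mathbb B: xf\circ(x\circ a)f=b\}$ and the $\circ$-differential uniformity is $\delta^\circ_f=\max_{a\neq0,\,b}\delta^\circ_f(a,b)$. *)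

(* Defs.v *)
From HB Require Import structures.
From mathcomp Require Import all_boot all_order all_algebra all_fingroup all_solvable.
Set Implicit Arguments. Unset Strict Implicit. Unset Printing Implicit Defensive.
Import GRing.Theory.

(* The space B = F_2^4, as row vectors (maps act on the right: x *m A). *)
Definition B := 'rV['F_2]_4.

(* Permutations of B compose in postfix order in MathComp:
   (s * t) x = t (s x), so the permutation product s * t is "first s, then t",
   matching the paper's convention. *)

Local Open Scope ring_scope.

Definition AGL_plus : {set {perm B}} :=
  [set t : {perm B} | [exists A : 'M['F_2]_4, [exists v : B,
      (A \in unitmx) && [forall x : B, t x == x *m A + v]]]].

Definition GL_plus : {set {perm B}} :=
  [set t : {perm B} | [exists A : 'M['F_2]_4,
      (A \in unitmx) && [forall x : B, t x == x *m A]]].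

Definition regular (T : {set {perm B}}) : Prop :=
  forall a b : B, exists! t : {perm B}, t \in T /\ t a = b.

(* tau_b : the element of T sending 0 to b (unique when T is regular). *)
Definition tau (T : {set {perm B}}) (b : B) : option {perm B} :=
  [pick t in T | t 0 == b].

Definition circ (T : {set {perm B}}) (a b : B) : B :=
  match tau T b with Some t => t a | None => a end.

(* GL(B,o): stabiliser of 0 in AGL(B,o) = N_{Sym(B)}(T). *)
Definition GL_circ (T : {set {perm B}}) : {set {perm B}} :=
  ('N(T) :&: [set h : {perm B} | h 0 == 0])%g.

Definition H_circ (T : {set {perm B}}) : {set {perm B}} :=
  (GL_plus :&: GL_circ T)%g.

Definition delta_ab (T : {set {perm B}}) (f : {perm B}) (a b : B) : nat :=
  #|[set x : B | circ T (f x) (f (circ T x a)) == b]|.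

Definition delta (T : {set {perm B}}) (f : {perm B}) : nat :=
  \max_(a : B | a != 0) \max_(b : B) delta_ab T f a b.

(* Main.v *)
Require Import Defs.
From HB Require Import structures.
From mathcomp Require Import all_boot all_order all_algebra all_fingroup all_solvable.
Set Implicit Arguments. Unset Strict Implicit. Unset Printing Implicit Defensive.
Import GRing.Theory.
Local Open Scope ring_scope.

Lemma circ_hom (T : {group {perm B}}) (hT_reg : regular T) (h : {perm B})
  (hh : h \in GL_circ T) (a b : B) :
  circ T (h a) (h b) = h (circ T a b).
Proof.
move: hh; rewrite /GL_circ inE => /andP [hN]; rewrite inE => /eqP h0.
rewrite /circ /tau.
case: pickP => [t2 /andP [t2T /eqP t20]|nt2]; last first.
  have [t2 [[t2T t20] _]] := hT_reg 0 (h b).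
  by move: (nt2 t2) => /=; rewrite t2T t20 eqxx.
case: pickP => [t /andP [tT /eqP t0]|nt]; last first.
  have [t [[tT t0] _]] := hT_reg 0 b.
  by move: (nt t) => /=; rewrite tT t0 eqxx.
have hconj : (t ^ h)%g \in T by rewrite memJ_norm.
have hinv0 : (h^-1)%g 0 = 0 by rewrite -{1}h0 permK.
have c0 : (t ^ h)%g 0 = h b by rewrite conjgE !permM hinv0 t0.
have [u [_ uniq]] := hT_reg 0 (h b).
have e1 := uniq _ (conj t2T t20).
have e2 := uniq _ (conj hconj c0).
have -> : t2 = (t ^ h)%g by rewrite -e1 -e2.
by rewrite conjgE !permM permK.
Qed.

Lemma delta_inv (T : {group {perm B}}) (hT_reg : regular T) (h1 h2 F : {perm B})
  (hh1 : h1 \in GL_circ T) (hh2 : h2 \in GL_circ T) :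
  delta T (h1 * F * h2)%g = delta T F.
Proof.
have h10 : h1 0 = 0 by move: hh1; rewrite inE => /andP [_]; rewrite inE => /eqP.
have hh2i : (h2^-1)%g \in GL_circ T.
  move: hh2; rewrite /GL_circ in_setI => /andP [hN]; rewrite inE => /eqP h0.
  by rewrite in_setI groupV hN inE /= -{1}h0 permK.
have key : forall a b, delta_ab T (h1 * F * h2)%g a b =
    delta_ab T F (h1 a) ((h2^-1)%g b).
  move=> a b; rewrite /delta_ab.
  rewrite -(card_imset _ (@perm_inj _ h1)).
  apply: eq_card => y; rewrite inE.
  apply/imsetP/idP.
    move=> [x]; rewrite inE => /eqP <- ->.
    by rewrite !permM -(circ_hom hT_reg hh1) (circ_hom hT_reg hh2) permK.
  move=> /eqP Hy; exists ((h1^-1)%g y); last by rewrite permKV.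
  rewrite inE !permM -(circ_hom hT_reg hh1) permKV (circ_hom hT_reg hh2) Hy.
  by rewrite permKV.
rewrite /delta (reindex_inj (@perm_inj _ (h1^-1)%g)) /=.
have h1i0 : (h1^-1)%g 0 = 0 by rewrite -{1}h10 permK.
apply: eq_big => [a|a _].
  have E : ((h1^-1)%g a == 0) = (a == 0)
    by rewrite -{1}h1i0 (inj_eq (@perm_inj _ (h1^-1)%g)).
  by rewrite E.
rewrite (reindex_inj (@perm_inj _ h2)) /=.
by apply: eq_bigr => b _; rewrite key permKV permK.
Qed.

Theorem proposition4 (T : {group {perm B}})
  (hT_abelem : (2.-abelem T)%g) (hT_reg : regular T) (hT_aff : (T \subset AGL_plus)%g)
  (g1 g2 f : {perm B}) (hg1 : g1 \in GL_plus) (hg2 : g2 \in GL_plus)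
  (g1' g2' : {perm B})
  (hg1' : g1' \in (g1 *: H_circ T)%g) (hg2' : g2' \in (H_circ T :* g2)%g) :
  delta T (g2 * f * g1)%g = delta T (g2' * f * g1')%g.
Proof.
move: hg1'; rewrite mem_lcoset /H_circ in_setI => /andP [_ H1].
move: hg2'; rewrite mem_rcoset /H_circ in_setI => /andP [_ H2].
have -> : (g2' * f * g1')%g = ((g2' * g2^-1) * (g2 * f * g1) * (g1^-1 * g1'))%g.
  by rewrite !mulgA mulgKV -!mulgA mulKVg.
by rewrite (@delta_inv T hT_reg _ _ (g2 * f * g1)%g H2 H1).
Qed.
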